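(* Let $\mathcal{X}\subseteq\mathbb{R}^d$ be compact, $c\ge2$, and $\{(\mathbf{x}_i,y_i)\}_{i=1}^n$ i.i.d. labeled data with $y_i\in\{1,\dots,c\}$. Let $S\colon\mathcal{X}\times\mathcal{X}\to[0,1]$ be symmetric continuous, and assume the eigenvalues $\lambda_k$ and orthonormal eigenfunctions $\phi_k$ of $(L_Sf)(\mathbf{x})=\int S(\mathbf{x},\mathbf{t})f(\mathbf{t})\,d\mathbf{t}$ satisfy $\sum_k\lambda_k|\phi_k(\mathbf{x})|^2<C$ for all $\mathbf{x}$, for some $C>0$; let $S^+=\sum_{k:\lambda_k\ge0}\lambda_k\phi_k\otimes\phi_k$ and $S^-=\sum_{k:\lambda_k<0}|\lambda_k|\phi_k\otimes\phi_k$. Let $B^+,B^-,R>0$ with $\sup_{\mathbf{x}\in\mathcal{X}}|S^+(\mathbf{x},\mathbf{x})|\le R^2$ and $\sup_{\mathbf{x}\in\mathcal{X}}|S^-(\mathbf{x},\mathbf{x})|\le R^2$, and let $\mathcal{H}_S$ be the class of margin functions defined below. Then for $\delta\in(0,1)$, with probability at least $1-\delta$ over the data $\{\mathbf{x}_i\}_{i=1}^n$, $$\mathfrak{R}(\mathcal{H}_S)\le\frac{R(2c-1)c(B^++B^-)}{\sqrt n}+2c(2c-1)(B^++B^-)R^2\sqrt{\frac{\ln(2/\delta)}{2n}}.$$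
   Context: $\boldsymbol{\alpha}^{(y)}$ has entries $\alpha_i$ if $y_i=y$ and $0$ otherwise; $[\mathbf{S}^\pm]_{ij}=S^\pm(\mathbf{x}_i,\mathbf{x}_j)$; $\Omega^\pm(\boldsymbol{\alpha})=\sum_{y=1}^c{\boldsymbol{\alpha}^{(y)}}^\top\mathbf{S}^\pm\boldsymbol{\alpha}^{(y)}$. For $1\le y\le c$, $\mathcal{H}_{S,y}=\{\mathbf{x}\mapsto\sum_{i:y_i=y}\alpha_iS(\mathbf{x},\mathbf{x}_i):\boldsymbol{\alpha}\ge0,\mathbf{1}^\top\boldsymbol{\alpha}=1,\Omega^+(\boldsymbol{\alpha})\le(B^+)^2,\Omega^-(\boldsymbol{\alpha})\le(B^-)^2\}$, and $\mathcal{H}_S$ is the class of margin functions $m_{h_S}(\mathbf{x},y)=h_S(\mathbf{x},y)-\max_{y'\neq y}h_S(\mathbf{x},y')$ with $h_S(\cdot,y)\in\mathcal{H}_{S,y}$. The Rademacher complexity of a class $\mathcal{A}$ is $\mathfrak{R}(\mathcal{A})=\mathbb{E}_{\{\sigma_i\},\{\mathbf{x}_i\}}\big[\sup_{h\in\mathcal{A}}\big|\frac1n\sum_{i=1}^n\sigma_ih(\mathbf{x}_i)\big|\big]$ with $\sigma_i$ i.i.d. uniform on $\{-1,1\}$ (for $\mathcal{H}_S$, $h(\mathbf{x}_i)$ means $m_{h_S}(\mathbf{x}_i,y_i)$). *)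

(* Defs.v *)
From HB Require Import structures.
From mathcomp Require Import all_boot all_order all_algebra.
From mathcomp Require Import all_classical all_reals all_analysis.
Set Implicit Arguments. Unset Strict Implicit. Unset Printing Implicit Defensive.
Import Order.TTheory GRing.Theory Num.Theory.
Import numFieldNormedType.Exports.
Local Open Scope classical_set_scope.
Local Open Scope ring_scope.

Section Defs.
Variable R : realType.

(* Points of R^d are d-tuples of reals (this type carries the product
   (Borel) sigma-algebra of the library).  For topological notions
   (compactness, continuity) we transport them to row vectors 'rV[R]_d. *)
Definition rowv d (t : d.-tuple R) : 'rV[R]_d := \row_i tnth t i.
Definition tupv d (u : 'rV[R]_d) : d.-tuple R := [tuple u ord0 i | i < d].

(* Lebesgue integral over R^d, written as the iterated one-dimensional
   Lebesgue integral (Fubini). *)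
Fixpoint leb_int (d : nat) : (d.-tuple R -> \bar R) -> \bar R :=
  match d with
  | 0 => fun f => f [tuple]
  | d'.+1 => fun f =>
      (\int[lebesgue_measure]_(s in [set: R])
         leb_int (fun u : d'.-tuple R => f (cons_tuple s u)))%E
  end.

Definition intX d (X : set (d.-tuple R)) (f : d.-tuple R -> R) : \bar R :=
  leb_int (fun t => (\1_X t * f t)%:E).

Definition Splus d (lam : nat -> R) (phi : nat -> d.-tuple R -> R) x t : R :=
  limn (fun N => \sum_(k < N | 0 <= lam k) lam k * phi k x * phi k t).
Definition Sminus d (lam : nat -> R) (phi : nat -> d.-tuple R -> R) x t : R :=
  limn (fun N => \sum_(k < N | lam k < 0) `|lam k| * phi k x * phi k t).

(* Diagonal values S^+(x,x), S^-(x,x): series of nonnegative terms,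
   taken in the extended reals (so that they are always well defined). *)
Definition Splus_diag d (lam : nat -> R) (phi : nat -> d.-tuple R -> R) x
  : \bar R := (\sum_(k <oo | (0 <= lam k)%R) (lam k * phi k x ^+ 2)%:E)%E.
Definition Sminus_diag d (lam : nat -> R) (phi : nat -> d.-tuple R -> R) x
  : \bar R := (\sum_(k <oo | (lam k < 0)%R) (`|lam k| * phi k x ^+ 2)%:E)%E.

Definition alpha_cls n (ys : 'I_n -> nat) (a : 'I_n -> R) (y : nat) :=
  fun i => if ys i == y then a i else 0.

Definition Omega T n (K : T -> T -> R) (xs : 'I_n -> T) (ys : 'I_n -> nat)
  (c : nat) (a : 'I_n -> R) : R :=
  \sum_(1 <= y < c.+1) \sum_i \sum_j
     alpha_cls ys a y i * K (xs i) (xs j) * alpha_cls ys a y j.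

Definition HSy T n (S Sp Sm : T -> T -> R) (Bp Bm : R)
  (xs : 'I_n -> T) (ys : 'I_n -> nat) (c y : nat) : set (T -> R) :=
  [set h | exists a : 'I_n -> R,
     [/\ (forall i, 0 <= a i), \sum_i a i = 1,
         Omega Sp xs ys c a <= Bp ^+ 2,
         Omega Sm xs ys c a <= Bm ^+ 2 &
         h = fun x => \sum_(i | ys i == y) a i * S x (xs i)]].

(* max_{y' in {1..c}, y' <> y} g y'  (a nonempty finite max when c >= 2) *)
Definition max_other (g : nat -> R) (c y : nat) : R :=
  fine (\big[Order.max/-oo%E]_(1 <= y' < c.+1 | y' != y) (g y')%:E)%E.

Definition HS T n (S Sp Sm : T -> T -> R) (Bp Bm : R)
  (xs : 'I_n -> T) (ys : 'I_n -> nat) (c : nat) : set (T -> nat -> R) :=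
  [set m | exists h : nat -> T -> R,
     (forall y, (1 <= y <= c)%N -> HSy S Sp Sm Bp Bm xs ys c y (h y)) /\
     m = fun x y => h y x - max_other (fun y' => h y' x) c y].

Definition iid_from dO (O : measurableType dO) (P : probability O R)
  dT (T : measurableType dT) (D : probability T R) n (Z : 'I_n -> O -> T) :=
  [/\ (forall i, measurable_fun setT (Z i)),
      (forall i (A : set T), measurable A -> P (Z i @^-1` A) = D A) &
      (forall A : 'I_n -> set T, (forall i, measurable (A i)) ->
         P (\bigcap_(i in [set: 'I_n]) (Z i @^-1` A i)) =
         (\prod_(i < n) P (Z i @^-1` A i))%E)].

(* Rademacher complexity of a class A of functions of (x,y), w.r.t. an
   i.i.d. sample Z (the expectation over the sample is the integral over P),
   the signs sigma ranging uniformly over {-1,1}^n. *)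
Definition Rademacher dO (O : measurableType dO) (P : probability O R)
  T n (Z : 'I_n -> O -> T * nat) (A : set (T -> nat -> R)) : \bar R :=
  ((2 ^ n)%:R^-1%:E *
   \sum_(s : {ffun 'I_n -> bool})
     \int[P]_w ereal_sup
        [set (`| n%:R^-1 * \sum_i (-1) ^+ s i * m (Z i w).1 (Z i w).2 |)%:E
        | m in A])%E.

End Defs.

(* Main.v *)
Require Import Defs.
From HB Require Import structures.
From mathcomp Require Import all_boot all_order all_algebra.
From mathcomp Require Import all_classical all_reals all_analysis.
From mathcomp.algebra_tactics Require Import ring lra.
Import Order.TTheory GRing.Theory Num.Theory.
Import numFieldNormedType.Exports.
Local Open Scope classical_set_scope.
Local Open Scope ring_scope.

Section Signs.
Variable R : realType.
Variable n : nat.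
Local Notation SG := {ffun 'I_n -> bool}.

Definition sg (s : SG) (j : 'I_n) : R := (-1) ^+ s j.

Lemma sgE s j : sg s j = if s j then -1 else 1.
Proof. by rewrite /sg; case: (s j); rewrite ?expr1 ?expr0. Qed.

Lemma sg_sq s j : sg s j * sg s j = 1.
Proof. by rewrite sgE; case: (s j); rewrite ?mulrNN mulr1. Qed.

Lemma norm_sg s j : `|sg s j| = 1.
Proof. by rewrite sgE; case: (s j); rewrite ?normrN normr1. Qed.

Definition flip (j : 'I_n) (s : SG) : SG :=
  [ffun i => if i == j then ~~ s i else s i].
Definition negs (s : SG) : SG := [ffun i => ~~ s i].

Lemma flipK j : involutive (flip j).
Proof.
move=> s; apply/ffunP => i; rewrite !ffunE.
by case: (i == j) => //=; rewrite negbK.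
Qed.

Lemma negsK : involutive negs.
Proof. by move=> s; apply/ffunP => i; rewrite !ffunE negbK. Qed.

Lemma sg_flip_same j s : sg (flip j s) j = - sg s j.
Proof. by rewrite !sgE ffunE eqxx; case: (s j) => /=; rewrite ?opprK. Qed.

Lemma sg_flip_other j s i : i != j -> sg (flip j s) i = sg s i.
Proof. by move=> ij; rewrite /sg ffunE (negbTE ij). Qed.

Lemma sg_negs s i : sg (negs s) i = - sg s i.
Proof. by rewrite !sgE ffunE; case: (s i) => /=; rewrite ?opprK. Qed.

Lemma sum_flip j (F : SG -> R) : \sum_s F (flip j s) = \sum_s F s.
Proof. by rewrite [RHS](reindex_inj (inv_inj (flipK j))). Qed.

Lemma sum_negs (F : SG -> R) : \sum_s F (negs s) = \sum_s F s.
Proof. by rewrite [RHS](reindex_inj (inv_inj negsK)). Qed.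

Lemma card_SG : #|{: SG}| = (2 ^ n)%N.
Proof. by rewrite card_ffun card_bool card_ord. Qed.

Lemma sum_cst_SG (a : R) : \sum_(s : SG) a = (2 ^ n)%:R * a.
Proof. by rewrite sumr_const card_SG mulr_natl. Qed.

Lemma sum_sg_sg j l :
  \sum_(s : SG) sg s j * sg s l = if j == l then (2 ^ n)%:R else 0.
Proof.
case: eqP => [<-|/eqP jl].
  by under eq_bigr do rewrite sg_sq; rewrite sum_cst_SG mulr1.
set S := \sum_s _.
have : S = - S.
  have lj : l != j by rewrite eq_sym.
  rewrite /S -[LHS](sum_flip j) -sumrN; apply: eq_bigr => s _.
  by rewrite sg_flip_same (sg_flip_other j s l lj) mulNr.
lra.
Qed.

Lemma sum_sg j : \sum_(s : SG) sg s j = 0.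
Proof.
set S := \sum_s _.
have : S = - S.
  by rewrite /S -[LHS](sum_flip j) -sumrN; apply: eq_bigr => s _; rewrite sg_flip_same.
lra.
Qed.

Lemma sum_quad (K : 'I_n -> 'I_n -> R) :
  \sum_(s : SG) \sum_j \sum_l sg s j * sg s l * K j l
  = (2 ^ n)%:R * \sum_j K j j.
Proof.
rewrite exchange_big /= mulr_sumr; apply: eq_bigr => j _.
rewrite exchange_big /= (bigD1 j) //= [X in _ + X]big1 ?addr0.
  by rewrite -mulr_suml sum_sg_sg eqxx.
by move=> l /negbTE lj; rewrite -mulr_suml sum_sg_sg eq_sym lj mul0r.
Qed.

Lemma sum_sqrt_le (q : SG -> R) (nu : R) : 0 < nu -> (forall s, 0 <= q s) ->
  \sum_s q s <= (2 ^ n)%:R * nu ^+ 2 -> \sum_s Num.sqrt (q s) <= (2 ^ n)%:R * nu.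
Proof.
move=> nu0 q0 hq.
have H s : Num.sqrt (q s) <= (q s / nu + nu) / 2.
  rewrite -subr_ge0.
  have -> : (q s / nu + nu) / 2 - Num.sqrt (q s)
          = (Num.sqrt (q s) - nu) ^+ 2 / (2 * nu).
    rewrite -{1}[q s](sqr_sqrtr (q0 s)); field.
    by rewrite lt0r_neq0.
  by rewrite divr_ge0 ?sqr_ge0 // mulr_ge0 // ltW.
apply: (le_trans (ler_sum _ (fun s _ => H s))).
rewrite -mulr_suml big_split /= -mulr_suml sum_cst_SG.
have hq' : (\sum_s q s) / nu <= (2 ^ n)%:R * nu.
  by rewrite ler_pdivrMr // -mulrA -expr2.
lra.
Qed.

End Signs.

Section Sup.
Variable R : realType.
Variables (P : Type) (A : set P) (h0 : P).
Hypothesis Ah0 : A h0.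

Definition sp (f : P -> R) : R := sup [set f h | h in A].
Definition bndf (f : P -> R) := exists K : R, forall h, A h -> `|f h| <= K.

Lemma sp_ub f h : bndf f -> A h -> f h <= sp f.
Proof.
move=> [K fK] Ah; apply: ub_le_sup; last by exists h.
by exists K => _ [h' Ah' <-]; exact: le_trans (ler_norm _) (fK _ Ah').
Qed.

Lemma sp_le f b : (forall h, A h -> f h <= b) -> sp f <= b.
Proof.
move=> fb; apply: ge_sup; first by exists (f h0), h0.
by move=> _ [h Ah <-]; exact: fb.
Qed.

Lemma sp_ext f g : (forall h, A h -> f h = g h) -> sp f = sp g.
Proof.
move=> fg; rewrite /sp; congr sup; apply/seteqP; split=> _ [h Ah <-];
  by exists h => //; rewrite fg.
Qed.

Lemma bndfD f g : bndf f -> bndf g -> bndf (fun h => f h + g h).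
Proof.
move=> [K1 H1] [K2 H2]; exists (K1 + K2) => h Ah.
by rewrite (le_trans (ler_normD _ _)) // lerD //; auto.
Qed.

Lemma bndfN f : bndf f -> bndf (fun h => - f h).
Proof. by move=> [K H]; exists K => h Ah; rewrite normrN; auto. Qed.

Lemma bndfZ k f : bndf f -> bndf (fun h => k * f h).
Proof.
move=> [K H]; exists (`|k| * K) => h Ah.
by rewrite normrM ler_wpM2l //; auto.
Qed.

Definition lip (phi : R -> R) := forall u v, `|phi u - phi v| <= `|u - v|.

Lemma lip_bound phi u : lip phi -> `|phi u| <= `|phi 0| + `|u|.
Proof.
move=> L; have := L u 0; rewrite subr0 => H.
have := ler_normD (phi u - phi 0) (phi 0); rewrite subrK => H2.
lra.
Qed.

Lemma bndf_lip phi f : lip phi -> bndf f -> bndf (fun h => phi (f h)).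
Proof.
move=> L [K H]; exists (`|phi 0| + K) => h Ah.
by rewrite (le_trans (lip_bound _ _ L)) // lerD //; auto.
Qed.

Lemma sp_D f g : bndf f -> bndf g -> sp (fun h => f h + g h) <= sp f + sp g.
Proof. by move=> bf bg; apply: sp_le => h Ah; apply: lerD; exact: sp_ub. Qed.

Lemma sp_Z k f : 0 <= k -> bndf f -> sp (fun h => k * f h) <= k * sp f.
Proof.
by move=> k0 bf; apply: sp_le => h Ah; apply: ler_wpM2l => //; exact: sp_ub.
Qed.

Lemma sp_contr1 (phi : R -> R) (a x : P -> R) : lip phi -> bndf a -> bndf x ->
  sp (fun h => a h + phi (x h)) + sp (fun h => a h - phi (x h))
  <= sp (fun h => a h + x h) + sp (fun h => a h - x h).
Proof.
move=> L ba bx.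
have bp : bndf (fun h => a h + x h) by exact: bndfD.
have bm : bndf (fun h => a h - x h) by apply: bndfD => //; exact: bndfN.
set RHS := sp (fun h => a h + x h) + _.
have key h h' : A h -> A h' ->
    (a h + phi (x h)) + (a h' - phi (x h')) <= RHS.
  move=> Ah Ah'.
  have l1 := L (x h) (x h').
  have l2 := ler_norm (phi (x h) - phi (x h')).
  have s1 := sp_ub _ _ bp Ah; have s2 := sp_ub _ _ bm Ah'.
  have s3 := sp_ub _ _ bp Ah'; have s4 := sp_ub _ _ bm Ah.
  rewrite /RHS.
  case: (leP (x h') (x h)) => c.
    have e : `|x h - x h'| = x h - x h' by rewrite ger0_norm // subr_ge0.
    rewrite e in l1; lra.
  have e : `|x h - x h'| = - (x h - x h') by rewrite ltr0_norm // subr_lt0.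
  rewrite e in l1; lra.
have H1 h' : A h' -> sp (fun h => a h + phi (x h)) <= RHS - (a h' - phi (x h')).
  by move=> Ah'; apply: sp_le => h Ah; have := key h h' Ah Ah'; lra.
have H2 : sp (fun h => a h - phi (x h)) <= RHS - sp (fun h => a h + phi (x h)).
  by apply: sp_le => h' Ah'; have := H1 h' Ah'; lra.
lra.
Qed.

Variable n : nat.
Local Notation SG := {ffun 'I_n -> bool}.

Definition bndv (v : P -> 'I_n -> R) :=
  exists K : R, forall h, A h -> forall j, `|v h j| <= K.
Definition lin (s : SG) (v : P -> 'I_n -> R) h := \sum_j sg R n s j * v h j.
Definition rs s v := sp (lin s v).
Definition Rad v := \sum_(s : SG) rs s v.

Lemma bndf_sum (Q : pred 'I_n) s (w : P -> 'I_n -> R) :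
  bndv w -> bndf (fun h => \sum_(j | Q j) sg R n s j * w h j).
Proof.
move=> [K HK]; exists (\sum_(j | Q j) K) => h Ah.
rewrite (le_trans (ler_norm_sum _ _ _)) // ler_sum // => j _.
by rewrite normrM norm_sg mul1r HK.
Qed.

Lemma bndv_lin s v : bndv v -> bndf (lin s v).
Proof. exact: (@bndf_sum predT). Qed.

Lemma bndvD v w : bndv v -> bndv w -> bndv (fun h j => v h j + w h j).
Proof.
move=> [K1 H1] [K2 H2]; exists (K1 + K2) => h Ah j.
by rewrite (le_trans (ler_normD _ _)) // lerD //; auto.
Qed.

Lemma bndvN v : bndv v -> bndv (fun h j => - v h j).
Proof. by move=> [K H]; exists K => h Ah j; rewrite normrN; auto. Qed.

Lemma bndvZ k v : bndv v -> bndv (fun h j => k * v h j).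
Proof.
move=> [K H]; exists (`|k| * K) => h Ah j.
by rewrite normrM ler_wpM2l //; auto.
Qed.

Lemma bndv_lip phi v : lip phi -> bndv v -> bndv (fun h j => phi (v h j)).
Proof.
move=> L [K H]; exists (`|phi 0| + K) => h Ah j.
by rewrite (le_trans (lip_bound _ _ L)) // lerD //; auto.
Qed.

Lemma bndv_max v w : bndv v -> bndv w ->
  bndv (fun h j => Num.max (v h j) (w h j)).
Proof.
move=> [K1 H1] [K2 H2]; exists (K1 + K2) => h Ah j.
have := H1 h Ah j; have := H2 h Ah j.
have := normr_ge0 (v h j); have := normr_ge0 (w h j).
by case: (leP (v h j) (w h j)) => _; lra.
Qed.

Lemma lin_D s v w h : lin s (fun h j => v h j + w h j) h = lin s v h + lin s w h.
Proof. by rewrite /lin -big_split; apply: eq_bigr => j _; rewrite mulrDr. Qed.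

Lemma Rad_D v w : bndv v -> bndv w ->
  Rad (fun h j => v h j + w h j) <= Rad v + Rad w.
Proof.
move=> bv bw; rewrite /Rad -big_split ler_sum // => s _.
rewrite /rs (sp_ext _ (fun h => lin s v h + lin s w h)); last first.
  by move=> h _; rewrite lin_D.
by apply: sp_D; exact: bndv_lin.
Qed.

Lemma Rad_N v : Rad (fun h j => - v h j) = Rad v.
Proof.
rewrite /Rad -[RHS]sum_negs; apply: eq_bigr => s _; rewrite /rs; congr sp.
apply: funext => h; rewrite /lin; apply: eq_bigr => j _.
by rewrite sg_negs mulrN mulNr.
Qed.

Lemma Rad_Z k v : 0 <= k -> bndv v -> Rad (fun h j => k * v h j) <= k * Rad v.
Proof.
move=> k0 bv; rewrite /Rad mulr_sumr ler_sum // => s _.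
rewrite /rs (sp_ext _ (fun h => k * lin s v h)); last first.
  by move=> h _; rewrite /lin mulr_sumr; apply: eq_bigr => j _; rewrite mulrCA.
by apply: sp_Z => //; exact: bndv_lin.
Qed.


Definition psi (phi : R -> R) (v : P -> 'I_n -> R) (k : nat) (h : P) (j : 'I_n) :=
  if (j < k)%N then v h j else phi (v h j).

Lemma bndv_psi phi v k : lip phi -> bndv v -> bndv (psi phi v k).
Proof.
move=> L [K H]; exists (`|phi 0| + K) => h Ah j; rewrite /psi.
case: ifP => _; last by rewrite (le_trans (lip_bound _ _ L)) // lerD //; auto.
have := H h Ah j; have := normr_ge0 (phi 0); lra.
Qed.

Lemma Rad_step phi v k : lip phi -> bndv v -> (k < n)%N ->
  Rad (psi phi v k) <= Rad (psi phi v k.+1).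
Proof.
move=> L bv kn; pose j0 : 'I_n := Ordinal kn.
pose a s h := \sum_(j | j != j0) sg R n s j * psi phi v k h j.
have Ek s h : lin s (psi phi v k) h = a s h + sg R n s j0 * phi (v h j0).
  by rewrite /lin (bigD1 j0) //= addrC /psi /= ltnn.
have Ek1 s h : lin s (psi phi v k.+1) h = a s h + sg R n s j0 * v h j0.
  rewrite /lin (bigD1 j0) //= addrC /psi /= ltnSn; congr (_ + _).
  apply: eq_bigr => j jj0; rewrite ltnS leq_eqVlt.
  have -> : (nat_of_ord j == k) = false.
    apply/negbTE; apply: contra jj0 => /eqP e; apply/eqP; apply: val_inj.
    by rewrite /= e.
  by [].
have Ef s h : a (flip n j0 s) h = a s h.
  by apply: eq_bigr => j jj0; rewrite sg_flip_other.
have ba s : bndf (a s) by apply: bndf_sum; exact: bndv_psi.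
have bx : bndf (fun h => v h j0).
  by case: bv => K HK; exists K => h Ah; exact: HK.
have Hs s : rs s (psi phi v k) + rs (flip n j0 s) (psi phi v k)
    <= rs s (psi phi v k.+1) + rs (flip n j0 s) (psi phi v k.+1).
  set e := sg R n s j0.
  have ee u : e * (e * u) = u by rewrite mulrA sg_sq mul1r.
  have ne : `|e| = 1 by rewrite norm_sg.
  have Le : lip (fun u => e * phi (e * u)).
    move=> u u'; rewrite -mulrBr normrM ne mul1r (le_trans (L _ _)) //.
    by rewrite -mulrBr normrM ne mul1r.
  have bex : bndf (fun h => e * v h j0) by exact: bndfZ.
  have H := sp_contr1 _ _ _ Le (ba s) bex.
  have -> : rs s (psi phi v k) = sp (fun h => a s h + e * phi (e * (e * v h j0))).
    by rewrite /rs; congr sp; apply: funext => h; rewrite Ek ee.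
  have -> : rs (flip n j0 s) (psi phi v k)
      = sp (fun h => a s h - e * phi (e * (e * v h j0))).
    rewrite /rs; congr sp; apply: funext => h.
    by rewrite Ek Ef sg_flip_same ee mulNr.
  have -> : rs s (psi phi v k.+1) = sp (fun h => a s h + e * v h j0).
    by rewrite /rs; congr sp; apply: funext => h; rewrite Ek1.
  have -> : rs (flip n j0 s) (psi phi v k.+1) = sp (fun h => a s h - e * v h j0).
    rewrite /rs; congr sp; apply: funext => h.
    by rewrite Ek1 Ef sg_flip_same mulNr.
  exact: H.
have : \sum_(s : SG) (rs s (psi phi v k) + rs (flip n j0 s) (psi phi v k))
    <= \sum_(s : SG) (rs s (psi phi v k.+1) + rs (flip n j0 s) (psi phi v k.+1)).
  by apply: ler_sum => s _; exact: Hs.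
rewrite !big_split /=.
rewrite (sum_flip _ _ j0 (fun s => rs s (psi phi v k))).
rewrite (sum_flip _ _ j0 (fun s => rs s (psi phi v k.+1))).
rewrite /Rad; lra.
Qed.

Lemma Rad_contr phi v : lip phi -> bndv v ->
  Rad (fun h j => phi (v h j)) <= Rad v.
Proof.
move=> L bv.
have H k : (k <= n)%N -> Rad (psi phi v 0) <= Rad (psi phi v k).
  elim: k => [|k IH] kn //.
  exact: le_trans (IH (ltnW kn)) (Rad_step _ _ _ L bv kn).
have E0 : (fun h j => phi (v h j)) = psi phi v 0.
  by apply: funext => h; apply: funext => j; rewrite /psi ltn0.
have En : v = psi phi v n.
  by apply: funext => h; apply: funext => j; rewrite /psi ltn_ord.
by rewrite E0 {2}En; exact: H.
Qed.

Lemma maxE2 (a b : R) : Num.max a b = 2^-1 * ((a + b) + `|a - b|).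
Proof.
case: (leP a b) => c.
  have -> : `|a - b| = - (a - b) by rewrite ler0_norm // subr_le0.
  lra.
have -> : `|a - b| = a - b by rewrite ger0_norm // subr_ge0 ltW.
lra.
Qed.

Lemma lip_norm : lip (fun u => `|u|).
Proof. by move=> u v; exact: ler_dist_dist. Qed.

Lemma Rad_max v w : bndv v -> bndv w ->
  Rad (fun h j => Num.max (v h j) (w h j)) <= Rad v + Rad w.
Proof.
move=> bv bw.
have -> : (fun h j => Num.max (v h j) (w h j))
    = (fun h j => 2^-1 * ((v h j + w h j) + `|v h j - w h j|)).
  by apply: funext => h; apply: funext => j; rewrite maxE2.
have bvw : bndv (fun h j => v h j + w h j) by exact: bndvD.
have bmw : bndv (fun h j => v h j - w h j) by apply: bndvD => //; exact: bndvN.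
have bab : bndv (fun h j => `|v h j - w h j|) by exact: bndv_lip lip_norm bmw.
have h2 : 0 <= (2 : R)^-1 by rewrite invr_ge0 ler0n.
have H1 := Rad_Z (2^-1) _ h2 (bndvD _ _ bvw bab).
have H2 := Rad_D _ _ bvw bab.
have H3 := Rad_D _ _ bv bw.
have H4 := Rad_contr _ _ lip_norm bmw.
have H5 := Rad_D _ _ bv (bndvN _ bw).
have H6 := Rad_N w.
simpl in *.
lra.
Qed.

End Sup.

Lemma abs_prod_le (R : realType) (a b : R) : `|a * b| <= (a ^+ 2 + b ^+ 2) / 2.
Proof.
rewrite normrM -(real_normK (num_real a)) -(real_normK (num_real b)).
have := normr_ge0 a; have := normr_ge0 b.
have := sqr_ge0 (`|a| - `|b|).
move: `|a| `|b| => x y; nra.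
Qed.

Lemma discr (R : realType) (A B C : R) :
  (forall t, 0 <= A + 2 * t * C + t ^+ 2 * B) -> 0 <= B -> C ^+ 2 <= A * B.
Proof.
move=> H B0; have A0 : 0 <= A by have := H 0; rewrite !(mul0r, mulr0, expr0n, addr0).
case: (eqVneq B 0) => [Bz|Bnz].
  case: (eqVneq C 0) => [->|Cnz]; first by rewrite expr0n /= Bz mulr0.
  have := H (- (A + 1) / (2 * C)).
  have -> : A + 2 * (- (A + 1) / (2 * C)) * C + (- (A + 1) / (2 * C)) ^+ 2 * B = -1.
    by rewrite Bz; field.
  lra.
have Bp : 0 < B by rewrite lt0r Bnz.
have := H (- C / B).
have -> : A + 2 * (- C / B) * C + (- C / B) ^+ 2 * B = A - C ^+ 2 / B.
  by field.
rewrite subr_ge0 ler_pdivrMr //.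
Qed.

Section Kernel.
Variable R : realType.
Variable d : nat.
Local Notation T := (d.-tuple R).
Variable X : set T.
Variable phi : nat -> T -> R.
Variable Q : pred nat.
Variable mu : nat -> R.
Variable Rr : R.
Hypothesis mu0 : forall k, Q k -> 0 <= mu k.
Hypothesis Hd : forall x, X x ->
  (`|\sum_(k <oo | Q k) (mu k * phi k x ^+ 2)%:E| <= (Rr ^+ 2)%:E)%E.

Definition KK x t := limn (fun N => \sum_(k < N | Q k) mu k * phi k x * phi k t).
Definition term x t k := if Q k then mu k * phi k x * phi k t else 0.

Lemma psum_series x t N :
  \sum_(k < N | Q k) mu k * phi k x * phi k t = series (term x t) N.
Proof. by rewrite /series /= big_mkord big_mkcond. Qed.

Lemma diag_le x N : X x -> \sum_(k < N | Q k) mu k * phi k x ^+ 2 <= Rr ^+ 2.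
Proof.
move=> Xx.
have H := @nneseries_lim_ge R (fun k => (mu k * phi k x ^+ 2)%:E) Q 0 N.
have : ((\sum_(0 <= i < N | Q i) (mu i * phi i x ^+ 2)%:E)
         <= (Rr ^+ 2)%:E)%E.
  have H0 : forall k, (0 <= k)%N -> Q k -> (0 <= (mu k * phi k x ^+ 2)%:E)%E.
    by move=> k _ Qk; rewrite lee_fin mulr_ge0 ?sqr_ge0 ?mu0.
  have H1 := H H0. have H2 := le_trans (lee_abs _) (Hd x Xx).
  have H3 := le_trans H1 H2. exact: H3.
by rewrite sumEFin lee_fin big_mkord.
Qed.

Lemma term_abs x t k :
  `|term x t k| <= (term x x k + term t t k) / 2.
Proof.
rewrite /term; case: ifP => Qk; last by rewrite normr0 !addr0 mul0r.
have m0 := mu0 _ Qk.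
rewrite -mulrA normrM (ger0_norm m0).
have := abs_prod_le _ (phi k x) (phi k t).
rewrite !expr2 => h.
have -> : (mu k * phi k x * phi k x + mu k * phi k t * phi k t) / 2
   = mu k * ((phi k x * phi k x + phi k t * phi k t) / 2) by ring.
exact: ler_wpM2l.
Qed.

Lemma term_diag_ge0 x k : 0 <= term x x k.
Proof.
rewrite /term; case: ifP => Qk //; rewrite -mulrA mulr_ge0 ?mu0 //.
by rewrite -expr2 sqr_ge0.
Qed.

Lemma series_diag_le x N : X x -> series (term x x) N <= Rr ^+ 2.
Proof.
move=> Xx; rewrite -psum_series.
by under eq_bigr do rewrite -mulrA -expr2; exact: diag_le.
Qed.

Lemma KK_cvg x t : X x -> X t -> cvgn (series (term x t)).
Proof.
move=> Xx Xt; apply: normed_cvg; apply: nondecreasing_is_cvgn.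
  by apply: nondecreasing_series => k _ _; exact: normr_ge0.
exists (Rr ^+ 2) => _ [N _ <-].
rewrite /series /=.
apply: (le_trans (ler_sum _ (fun k _ => term_abs x t k))).
rewrite -mulr_suml big_split /=.
have := series_diag_le x N Xx; have := series_diag_le t N Xt.
rewrite /series /=; lra.
Qed.

Lemma KK_lim x t : X x -> X t -> series (term x t) @ \oo --> KK x t.
Proof.
move=> Xx Xt.
have -> : KK x t = limn (series (term x t)).
  rewrite /KK (_ : (fun N => _) = series (term x t)) //.
  by apply: funext => N; exact: psum_series.
exact: KK_cvg.
Qed.

Lemma KK_sym x t : KK x t = KK t x.
Proof.
rewrite /KK; congr (lim (_ @ \oo)); apply: funext => N; apply: eq_bigr => k _.
by rewrite mulrAC.
Qed.

Lemma KK_diag_le x : X x -> KK x x <= Rr ^+ 2.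
Proof.
move=> Xx; apply: (closed_cvg [set y | y <= Rr ^+ 2] _ _ _ (KK_lim x x Xx Xx)).
  exact: closed_le.
by near=> N; exact: series_diag_le x N Xx.
Unshelve. all: by end_near.
Qed.

Lemma KK_diag_ge0 x : X x -> 0 <= KK x x.
Proof.
move=> Xx; apply: (closed_cvg [set y : R | 0 <= y] _ _ _ (KK_lim x x Xx Xx)).
  exact: closed_ge.
near=> N; rewrite /series /=; apply: sumr_ge0 => k _; exact: term_diag_ge0.
Unshelve. all: by end_near.
Qed.

Lemma KK_psd (I : finType) (p : I -> T) (a : I -> R) : (forall i, X (p i)) ->
  0 <= \sum_i \sum_j a i * a j * KK (p i) (p j).
Proof.
move=> Xp.
pose u N := \sum_i \sum_j a i * a j * series (term (p i) (p j)) N.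
have Hc : u @ \oo --> \sum_i \sum_j a i * a j * KK (p i) (p j).
  rewrite /u; apply: cvg_big => [|i _]; first exact: add_continuous.
  apply: cvg_big => [|j _]; first exact: add_continuous.
  by apply: cvgMr; exact: KK_lim.
apply: (closed_cvg [set y : R | 0 <= y] _ _ _ Hc); first exact: closed_ge.
near=> N; rewrite /u /=.
have -> : \sum_i \sum_j a i * a j * series (term (p i) (p j)) N
  = \sum_(0 <= k < N) (if Q k then mu k * (\sum_i a i * phi k (p i)) ^+ 2 else 0).
  rewrite /series /=.
  under eq_bigr do under eq_bigr do rewrite mulr_sumr.
  under eq_bigr do rewrite exchange_big /=.
  rewrite exchange_big /=; apply: eq_bigr => k _.
  rewrite /term; case: ifP => Qk; last by rewrite big1 // => i _; rewrite big1 // => j _; rewrite mulr0.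
  rewrite expr2 mulr_suml mulr_sumr; apply: eq_bigr => i _.
  rewrite mulr_sumr mulr_sumr; apply: eq_bigr => j _; ring.
apply: sumr_ge0 => k _; case: ifP => Qk //.
by rewrite mulr_ge0 ?sqr_ge0 ?mu0.
Unshelve. all: by end_near.
Qed.

End Kernel.

Lemma sqrt_le_of (R : realType) (a b : R) : 0 <= b -> a <= b ^+ 2 -> Num.sqrt a <= b.
Proof.
move=> b0 ab; have <- : Num.sqrt (b ^+ 2) = b by rewrite sqrtr_sqr ger0_norm.
by rewrite ler_sqrt // sqr_ge0.
Qed.


Lemma bigmaxP (R : realType) (r : seq nat) (Pr : pred nat) (g : nat -> R) :
  has Pr r ->
  (exists i, [/\ i \in r, Pr i &
     \big[Order.max/-oo%E]_(i <- r | Pr i) (g i)%:E = (g i)%:E])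
  /\ (forall i, i \in r -> Pr i ->
        ((g i)%:E <= \big[Order.max/-oo%E]_(i <- r | Pr i) (g i)%:E)%E).
Proof.
elim: r => [//|a r IH] /= hP.
rewrite big_cons.
case Pa: (Pr a); last first.
  have hr : has Pr r by move: hP; rewrite Pa.
  have [[i [ir Pi E]] U] := IH hr.
  split; first by exists i; rewrite inE ir orbT.
  by move=> i'; rewrite inE => /orP[/eqP ->|i'r Pi']; [rewrite Pa | exact: U].
case hr: (has Pr r); last first.
  rewrite big_hasC ?hr //.
  have -> : Order.max (g a)%:E -oo%E = (g a)%:E.
    by rewrite maxEle leeNy_eq.
  split; first by exists a; rewrite inE eqxx.
  move=> i; rewrite inE => /orP[/eqP ->|ir Pi] //.
  by move/negbT/hasPn: hr => /(_ i ir); rewrite Pi.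
have [[i [ir Pi E]] U] := IH hr.
rewrite E maxEle.
split.
  case: ifP => _; first by exists i; rewrite inE ir orbT.
  by exists a; rewrite inE eqxx.
move=> i'; rewrite inE => /orP[/eqP ->|i'r Pi'].
  by case: ifP => // ->.
case: ifP => c; first by rewrite -E; exact: U.
apply: le_trans (U _ i'r Pi') _; rewrite E.
by apply: ltW; rewrite ltNge c.
Qed.

Lemma max_otherP (R : realType) (g : nat -> R) c y : (2 <= c)%N -> (1 <= y <= c)%N ->
  (exists y', [/\ (1 <= y' <= c)%N, y' != y & max_other g c y = g y'])
  /\ (forall y', (1 <= y' <= c)%N -> y' != y -> g y' <= max_other g c y).
Proof.
move=> c2 yc.
have hh : has (fun y' => y' != y) (index_iota 1 c.+1).
  apply/hasP; exists (if y == 1%N then 2%N else 1%N).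
    rewrite mem_index_iota; case: (y == 1%N); rewrite /= ltnS //.
    exact: ltnW.
  case: (eqVneq y 1%N) => [->|ne] //=.
  by rewrite eq_sym.
have [[i [ir Pi E]] U] := bigmaxP _ _ _ g hh.
rewrite /max_other E /=.
split; first by exists i; split => //; move: ir; rewrite mem_index_iota ltnS.
move=> y' y'c y'y; have := U y'; rewrite mem_index_iota ltnS y'c => /(_ isT y'y).
by rewrite E lee_fin.
Qed.

Section Spec.
Variables (R : realType) (d : nat).
Local Notation T := (d.-tuple R).
Variables (X : set T) (S : T -> T -> R) (lam : nat -> R) (phi : nat -> T -> R) (Rr : R).
Hypothesis Hdp : forall x, X x -> (`|Splus_diag lam phi x| <= (Rr ^+ 2)%:E)%E.
Hypothesis Hdm : forall x, X x -> (`|Sminus_diag lam phi x| <= (Rr ^+ 2)%:E)%E.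
Hypothesis Hexp : forall x t, X x -> X t ->
  (fun N => \sum_(k < N) lam k * phi k x * phi k t) @ \oo --> S x t.

Definition Qp : pred nat := fun k => 0 <= lam k.
Definition Qm : pred nat := fun k => lam k < 0.
Definition mum k := `|lam k|.

Lemma mup0 k : Qp k -> 0 <= lam k. Proof. by []. Qed.
Lemma mum0 k : Qm k -> 0 <= mum k. Proof. by move=> _; exact: normr_ge0. Qed.

Local Notation Kp := (Splus lam phi).
Local Notation Km := (Sminus lam phi).

Lemma Kp_KK : Kp = KK R d phi Qp lam. Proof. by []. Qed.
Lemma Km_KK : Km = KK R d phi Qm mum. Proof. by []. Qed.

Lemma psd_p (I : finType) (p : I -> T) (a : I -> R) : (forall i, X (p i)) ->
  0 <= \sum_i \sum_j a i * a j * Kp (p i) (p j).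
Proof. move=> Xp; rewrite Kp_KK; exact: (KK_psd R d X phi Qp lam Rr mup0 Hdp I p a Xp). Qed.

Lemma psd_m (I : finType) (p : I -> T) (a : I -> R) : (forall i, X (p i)) ->
  0 <= \sum_i \sum_j a i * a j * Km (p i) (p j).
Proof. move=> Xp; rewrite Km_KK; exact: (KK_psd R d X phi Qm mum Rr mum0 Hdm I p a Xp). Qed.

Lemma sym_p x t : Kp x t = Kp t x. Proof. rewrite Kp_KK; exact: KK_sym. Qed.
Lemma sym_m x t : Km x t = Km t x. Proof. rewrite Km_KK; exact: KK_sym. Qed.

Lemma diag_p x : X x -> Kp x x <= Rr ^+ 2.
Proof. exact: (KK_diag_le R d X phi Qp lam Rr mup0 Hdp). Qed.
Lemma diag_m x : X x -> Km x x <= Rr ^+ 2.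
Proof. exact: (KK_diag_le R d X phi Qm mum Rr mum0 Hdm). Qed.
Lemma diag_p0 x : X x -> 0 <= Kp x x.
Proof. exact: (KK_diag_ge0 R d X phi Qp lam Rr mup0 Hdp). Qed.
Lemma diag_m0 x : X x -> 0 <= Km x x.
Proof. exact: (KK_diag_ge0 R d X phi Qm mum Rr mum0 Hdm). Qed.

Lemma decomp x t : X x -> X t -> S x t = Kp x t - Km x t.
Proof.
move=> Xx Xt.
have Hp := KK_lim R d X phi Qp lam Rr mup0 Hdp x t Xx Xt.
have Hm := KK_lim R d X phi Qm mum Rr mum0 Hdm x t Xx Xt.
have H2 := @cvgB R R nat \oo (filter_on_Filter eventually_filterType) _ _ _ _ Hp Hm.
have E : (fun N => \sum_(k < N) lam k * phi k x * phi k t)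
    = (fun N => series (term R d phi Qp lam x t) N - series (term R d phi Qm mum x t) N).
  apply: funext => N; rewrite /series /= !big_mkord -sumrB.
  apply: eq_bigr => k _; rewrite /term /Qp /Qm /mum.
  case: (leP 0 (lam k)) => c /=.
    by rewrite subr0.
  by rewrite ltr0_norm // sub0r !mulNr opprK.
have H1 := Hexp x t Xx Xt; rewrite E in H1.
have H4 : (fun N => series (term R d phi Qp lam x t) N - series (term R d phi Qm mum x t) N) @ \oo
   --> KK R d phi Qp lam x t - KK R d phi Qm mum x t := H2.
exact: (cvg_unique (@Rhausdorff R) H1 H4).
Qed.

Lemma cross_cs (Kf : T -> T -> R) (sym : forall x t, Kf x t = Kf t x)
  (psd : forall (I : finType) (p : I -> T) (a : I -> R), (forall i, X (p i)) ->
     0 <= \sum_i \sum_j a i * a j * Kf (p i) (p j))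
  m1 m2 (p : 'I_m1 -> T) (q : 'I_m2 -> T) (al : 'I_m1 -> R) (be : 'I_m2 -> R) :
  (forall i, X (p i)) -> (forall j, X (q j)) ->
  (\sum_i \sum_j al i * be j * Kf (p i) (q j)) ^+ 2
  <= (\sum_i \sum_i' al i * al i' * Kf (p i) (p i'))
     * (\sum_j \sum_j' be j * be j' * Kf (q j) (q j')).
Proof.
move=> Xp Xq; apply: discr; last exact: psd.
move=> t.
pose pt (z : ('I_m1 + 'I_m2)%type) := match z with inl i => p i | inr j => q j end.
pose co (z : ('I_m1 + 'I_m2)%type) := match z with inl i => al i | inr j => t * be j end.
have Xpt z : X (pt z) by case: z.
pose A := \sum_i \sum_i' al i * al i' * Kf (p i) (p i').
pose B := \sum_j \sum_j' be j * be j' * Kf (q j) (q j').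
pose C := \sum_i \sum_j al i * be j * Kf (p i) (q j).
have E2 : \sum_i \sum_j al i * (t * be j) * Kf (p i) (q j) = t * C.
  rewrite /C mulr_sumr; apply: eq_bigr => i _; rewrite mulr_sumr.
  by apply: eq_bigr => j _; ring.
have E3 : \sum_j \sum_i t * be j * al i * Kf (q j) (p i) = t * C.
  rewrite /C exchange_big mulr_sumr; apply: eq_bigr => i _; rewrite mulr_sumr.
  by apply: eq_bigr => j _; rewrite sym; ring.
have E4 : \sum_j \sum_j' t * be j * (t * be j') * Kf (q j) (q j') = t ^+ 2 * B.
  rewrite /B mulr_sumr; apply: eq_bigr => j _; rewrite mulr_sumr.
  by apply: eq_bigr => j' _; ring.
have E : \sum_z \sum_z' co z * co z' * Kf (pt z) (pt z') = A + 2 * t * C + t ^+ 2 * B.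
  rewrite big_sumType /=.
  under eq_bigr do rewrite big_sumType /=.
  under [X in _ + X]eq_bigr do rewrite big_sumType /=.
  rewrite !big_split /= E2 E3 E4 /A; ring.
have := psd _ pt co Xpt; rewrite E.
by [].
Qed.

Lemma omega_ge (Kf : T -> T -> R) n (xs : 'I_n -> T) (ys : 'I_n -> nat) c a y :
  (1 <= y <= c)%N ->
  (forall y', 0 <= \sum_i \sum_j alpha_cls ys a y' i * alpha_cls ys a y' j * Kf (xs i) (xs j)) ->
  \sum_i \sum_j alpha_cls ys a y i * alpha_cls ys a y j * Kf (xs i) (xs j)
  <= Omega Kf xs ys c a.
Proof.
move=> yc H; rewrite /Omega (bigD1_seq y) ?iota_uniq //=; last first.
  by rewrite mem_index_iota ltnS.
have -> : \sum_i \sum_j alpha_cls ys a y i * Kf (xs i) (xs j) * alpha_cls ys a y j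
   = \sum_i \sum_j alpha_cls ys a y i * alpha_cls ys a y j * Kf (xs i) (xs j).
  by apply: eq_bigr => i _; apply: eq_bigr => j _; rewrite mulrAC.
rewrite lerDl sumr_ge0 // => y' _.
have := H y'; congr (_ <= _); apply: eq_bigr => i _; apply: eq_bigr => j _.
by rewrite mulrAC.
Qed.

Variables (n : nat) (xs : 'I_n -> T) (ys : 'I_n -> nat) (c : nat) (Bp Bm : R).
Hypothesis Xxs : forall i, X (xs i).
Hypotheses (Bp0 : 0 < Bp) (Bm0 : 0 < Bm).

Definition Qf (Kf : T -> T -> R) m (u : 'I_m -> T) (be : 'I_m -> R) :=
  \sum_j \sum_l be j * be l * Kf (u j) (u l).
Arguments Qf Kf {m} u be.

Lemma cs_bound (Kf : T -> T -> R) (sym : forall x t, Kf x t = Kf t x)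
  (psd : forall (I : finType) (p : I -> T) (a : I -> R), (forall i, X (p i)) ->
     0 <= \sum_i \sum_j a i * a j * Kf (p i) (p j))
  (B : R) (a : 'I_n -> R) y m (u : 'I_m -> T) (be : 'I_m -> R) :
  0 < B -> (1 <= y <= c)%N -> Omega Kf xs ys c a <= B ^+ 2 -> (forall j, X (u j)) ->
  `|\sum_j \sum_i be j * alpha_cls ys a y i * Kf (u j) (xs i)|
  <= B * Num.sqrt (Qf Kf u be).
Proof.
move=> B0 yc Om Xu.
set C := \sum_j _.
have H := cross_cs _ sym psd _ _ u xs be (alpha_cls ys a y) Xu Xxs.
have Q0 : 0 <= Qf Kf u be by exact: psd.
have Ale : \sum_i \sum_i' alpha_cls ys a y i * alpha_cls ys a y i' * Kf (xs i) (xs i')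
    <= B ^+ 2.
  apply: le_trans Om; apply: omega_ge => // y'; exact: psd.
have A0 : 0 <= \sum_i \sum_i' alpha_cls ys a y i * alpha_cls ys a y i' * Kf (xs i) (xs i').
  exact: psd.
rewrite -/C in H.
have HC : `|C| <= Num.sqrt (Qf Kf u be) * Num.sqrt (B ^+ 2).
  rewrite -sqrtrM // -sqrtr_sqr ler_sqrt; last by apply: mulr_ge0 => //; exact: sqr_ge0.
  apply: le_trans H _; rewrite /Qf; apply: ler_wpM2l => //.
move: HC; rewrite sqrtr_sqr (gtr0_norm B0) [B * _]mulrC.
by [].
Qed.

Lemma h_bound (y : nat) h m (u : 'I_m -> T) (be : 'I_m -> R) :
  (1 <= y <= c)%N -> HSy S Kp Km Bp Bm xs ys c y h -> (forall j, X (u j)) ->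
  `|\sum_j be j * h (u j)|
  <= Bp * Num.sqrt (Qf Kp u be) + Bm * Num.sqrt (Qf Km u be).
Proof.
move=> yc [a [a0 a1 Op Om ->]] Xu.
have E : \sum_j be j * (\sum_(i | ys i == y) a i * S (u j) (xs i))
  = \sum_j \sum_i be j * alpha_cls ys a y i * Kp (u j) (xs i)
    - \sum_j \sum_i be j * alpha_cls ys a y i * Km (u j) (xs i).
  rewrite -sumrB; apply: eq_bigr => j _; rewrite -sumrB big_mkcond mulr_sumr.
  apply: eq_bigr => i _; rewrite /alpha_cls; case: (ys i == y).
    by rewrite decomp // mulrA mulrBr.
  by rewrite !mulr0 !mul0r subr0.
rewrite E (le_trans (ler_normB _ _)) // lerD //.
  exact: (cs_bound _ sym_p psd_p Bp a y m u be Bp0 yc Op Xu).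
exact: (cs_bound _ sym_m psd_m Bm a y m u be Bm0 yc Om Xu).
Qed.


Hypothesis Rr0 : 0 < Rr.
Variables (u : 'I_n -> T) (l : 'I_n -> nat).
Hypothesis Xu : forall j, X (u j).
Hypothesis lc : forall j, (1 <= l j <= c)%N.
Hypothesis n0 : (0 < n)%N.

Definition AH : set (nat -> T -> R) :=
  [set h | forall y, (1 <= y <= c)%N -> HSy S Kp Km Bp Bm xs ys c y (h y)].
Definition MM := (Bp + Bm) * Rr.
Definition Gam (w : 'I_n -> R) (s : {ffun 'I_n -> bool}) :=
  Bp * Num.sqrt (Qf Kp u (fun j => sg R n s j * w j))
  + Bm * Num.sqrt (Qf Km u (fun j => sg R n s j * w j)).

Lemma sqrt_sum_bound (Kf : T -> T -> R)
  (psd : forall (I : finType) (p : I -> T) (a : I -> R), (forall i, X (p i)) ->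
     0 <= \sum_i \sum_j a i * a j * Kf (p i) (p j))
  (dg0 : forall x, X x -> 0 <= Kf x x) (dgl : forall x, X x -> Kf x x <= Rr ^+ 2)
  (w : 'I_n -> R) : (forall j, w j ^+ 2 <= 1) ->
  \sum_(s : {ffun 'I_n -> bool}) Num.sqrt (Qf Kf u (fun j => sg R n s j * w j))
  <= (2 ^ n)%:R * (Rr * Num.sqrt n%:R).
Proof.
move=> hw; apply: sum_sqrt_le.
- by rewrite mulr_gt0 // sqrtr_gt0 ltr0n.
- by move=> s; rewrite /Qf; apply: psd.
have -> : \sum_(s : {ffun 'I_n -> bool}) Qf Kf u (fun j => sg R n s j * w j)
    = \sum_(s : {ffun 'I_n -> bool}) \sum_j \sum_l
        sg R n s j * sg R n s l * (w j * w l * Kf (u j) (u l)).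
  apply: eq_bigr => s _; apply: eq_bigr => j _; apply: eq_bigr => k _; ring.
rewrite sum_quad ler_wpM2l // exprMn sqr_sqrtr ?ler0n //.
have -> : Rr ^+ 2 * n%:R = \sum_(j < n) Rr ^+ 2.
  by rewrite sumr_const card_ord mulr_natr.
apply: ler_sum => j _.
have K0 := dg0 _ (Xu j); have K1 := dgl _ (Xu j).
have := ler_wpM2r K0 (hw j); rewrite mul1r -expr2 => H.
exact: le_trans H K1.
Qed.

Lemma Gam_sum (w : 'I_n -> R) : (forall j, w j ^+ 2 <= 1) ->
  \sum_(s : {ffun 'I_n -> bool}) Gam w s <= (2 ^ n)%:R * (MM * Num.sqrt n%:R).
Proof.
move=> hw; rewrite /Gam big_split /= -!mulr_sumr.
have H1 := sqrt_sum_bound _ psd_p diag_p0 diag_p w hw.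
have H2 := sqrt_sum_bound _ psd_m diag_m0 diag_m w hw.
apply: le_trans (lerD (ler_wpM2l (ltW Bp0) H1) (ler_wpM2l (ltW Bm0) H2)) _.
by rewrite /MM le_eqVlt; apply/orP; left; apply/eqP; ring.
Qed.

Lemma Gam_ge0 w s : 0 <= Gam w s.
Proof.
by rewrite /Gam addr_ge0 // mulr_ge0 ?sqrtr_ge0 // ltW.
Qed.

Lemma h_abs h y j : AH h -> (1 <= y <= c)%N -> `|h y (u j)| <= MM.
Proof.
move=> Hh yc.
have := h_bound y (h y) 1 (fun _ : 'I_1 => u j) (fun _ => 1) yc (Hh y yc) (fun _ => Xu j).
rewrite big_ord1 mul1r /Qf !big_ord1 !mul1r => H.
apply: le_trans H _; rewrite /MM mulrDl lerD //.
- by rewrite (ler_wpM2l (ltW Bp0)) //; apply: sqrt_le_of; [exact: ltW | exact: diag_p].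
- by rewrite (ler_wpM2l (ltW Bm0)) //; apply: sqrt_le_of; [exact: ltW | exact: diag_m].
Qed.

Lemma sum_ind_nat (j : 'I_n) (F : nat -> R) :
  \sum_(1 <= y < c.+1) (l j == y)%:R * F y = F (l j).
Proof.
rewrite (bigD1_seq (l j)) ?iota_uniq //=; last by rewrite mem_index_iota ltnS lc.
rewrite eqxx mul1r big1 ?addr0 // => y yl.
by rewrite eq_sym (negbTE yl) mul0r.
Qed.

Lemma first_eq h (s : {ffun 'I_n -> bool}) :
  \sum_j sg R n s j * h (l j) (u j)
  = \sum_(1 <= y < c.+1) \sum_j (sg R n s j * (l j == y)%:R) * h y (u j).
Proof.
rewrite exchange_big /=; apply: eq_bigr => j _.
rewrite -(sum_ind_nat j (fun y => h y (u j))) mulr_sumr.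
by apply: eq_bigr => y _; rewrite mulrA.
Qed.

Lemma ind_sq (b : bool) : (b%:R : R) ^+ 2 <= 1.
Proof. by case: b; rewrite ?expr1n ?expr0n. Qed.

Lemma first_bound h s : AH h ->
  `|\sum_j sg R n s j * h (l j) (u j)|
  <= \sum_(1 <= y < c.+1) Gam (fun j => (l j == y)%:R) s.
Proof.
move=> Hh; rewrite first_eq; apply: (le_trans (ler_norm_sum _ _ _)).
rewrite [X in X <= _]big_nat_cond [X in _ <= X]big_nat_cond.
apply: ler_sum => y /andP[yc _]; rewrite ltnS in yc.
exact: (h_bound y (h y) n u (fun j => sg R n s j * (l j == y)%:R) yc (Hh y yc) Xu).
Qed.


Local Notation SG := {ffun 'I_n -> bool}.
Local Notation PT := (nat -> T -> R).

Definition muv (h : PT) (j : 'I_n) := max_other (fun y' => h y' (u j)) c (l j).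
Definition mv (h : PT) (j : 'I_n) := h (l j) (u j) - muv h j.

Lemma muv_abs h j : (2 <= c)%N -> AH h -> `|muv h j| <= MM.
Proof.
move=> c2 Hh; have [[y' [y'c _ E]] _] := max_otherP _ (fun y' => h y' (u j)) _ _ c2 (lc j).
rewrite /muv E; exact: (h_abs h y' j Hh y'c).
Qed.

Definition LL := 2 * MM + 1.
Definition fv (y' : nat) (h : PT) (j : 'I_n) := h y' (u j) - LL * (y' == l j)%:R.
Fixpoint Mx (k : nat) : PT -> 'I_n -> R :=
  match k with
  | 0 => fv 1
  | k'.+1 => fun h j => Num.max (Mx k' h j) (fv k'.+2 h j)
  end.

Lemma Mx_spec k h j :
  (forall y', (1 <= y' <= k.+1)%N -> fv y' h j <= Mx k h j)
  /\ exists y'', (1 <= y'' <= k.+1)%N /\ Mx k h j = fv y'' h j.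
Proof.
elim: k => [|k [IH1 [y'' [y''r IH2]]]].
  split; last by exists 1%N.
  move=> y' /andP[a b]; have -> : y' = 1%N by apply/eqP; rewrite eqn_leq a b.
  exact: lexx.
split.
  move=> y' /andP[y'1]; rewrite leq_eqVlt => /orP[/eqP ->|y'k] /=.
    by rewrite le_max lexx orbT.
  rewrite ltnS in y'k.
  by rewrite le_max IH1 // y'1 y'k.
rewrite /= maxEle; case: ifP => _.
  by exists k.+2; rewrite leqnn.
exists y''; split => //; move: y''r => /andP[-> /=] ?; exact: leqW.
Qed.

Lemma MM_ge0 : 0 <= MM.
Proof. by rewrite /MM; apply: mulr_ge0; [apply: addr_ge0; exact: ltW | exact: ltW]. Qed.

Lemma muv_Mx h j : (2 <= c)%N -> AH h -> muv h j = Mx c.-1 h j.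
Proof.
move=> c2 Hh.
have c0 : (0 < c)%N by apply: leq_trans c2.
have [[zt [ztc ztl ztE]] Up] := max_otherP _ (fun y' => h y' (u j)) _ _ c2 (lc j).
have [S1 [y'' [y''c S2]]] := Mx_spec c.-1 h j.
rewrite prednK // in S1 y''c.
apply/eqP; rewrite eq_le; apply/andP; split.
  have := S1 zt ztc; rewrite /fv (negbTE ztl) mulr0 subr0.
  by rewrite /muv ztE.
rewrite S2 /fv /muv ztE.
case: (eqVneq y'' (l j)) => [e|ne].
  rewrite e mulr1.
  have := h_abs h (l j) j Hh (lc j); have := h_abs h zt j Hh ztc.
  have := MM_ge0; rewrite /LL => m0 a1 a2.
  have := ler_norm (h (l j) (u j)).
  have := ler_norm (- h zt (u j)); rewrite normrN.
  lra.
rewrite mulr0 subr0 -ztE.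
exact: Up.
Qed.


Local Notation BV := (bndv R PT AH n).
Local Notation RAD := (Rad R PT AH n).
Local Notation RS := (rs R PT AH n).
Local Notation LIN := (lin R PT n).

Lemma bndv_fv y' : (1 <= y' <= c)%N -> BV (fv y').
Proof.
move=> yc; exists (MM + LL) => h Hh j; rewrite /fv.
apply: le_trans (ler_normB _ _) _; apply: lerD; first exact: h_abs.
have L0 : 0 <= LL by rewrite /LL addr_ge0 // mulr_ge0 // MM_ge0.
rewrite normrM ger0_norm //; case: (y' == l j); rewrite ?normr1 ?normr0 ?mulr1 ?mulr0 //.
Qed.

Lemma bndv_Mx k : (k < c)%N -> BV (Mx k).
Proof.
elim: k => [|k IH] kc /=.
  by apply: bndv_fv; rewrite /= kc.
apply: bndv_max; first exact: IH (ltnW kc).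
by apply: bndv_fv; rewrite kc.
Qed.

Lemma lin_N s v h : LIN s (fun h j => - v h j) h = - LIN s v h.
Proof. by rewrite /lin -sumrN; apply: eq_bigr => j _; rewrite mulrN. Qed.

Lemma sum_lin0 v h : \sum_(s : SG) LIN s v h = 0.
Proof.
rewrite /lin exchange_big /= big1 // => j _.
by rewrite -mulr_suml sum_sg mul0r.
Qed.

Lemma Rad_fv h0 (Ah0 : AH h0) y' : (1 <= y' <= c)%N ->
  RAD (fv y') <= (2 ^ n)%:R * (MM * Num.sqrt n%:R).
Proof.
move=> yc; rewrite /Rad.
apply: le_trans (_ : _ <= \sum_(s : SG) (Gam (fun _ => 1) s
   - \sum_j sg R n s j * (LL * (y' == l j)%:R))) _.
  apply: ler_sum => s _; rewrite /rs; apply: (sp_le _ _ _ h0 Ah0) => h Hh.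
  rewrite /lin /fv.
  have -> : \sum_j sg R n s j * (h y' (u j) - LL * (y' == l j)%:R)
     = \sum_j (sg R n s j * 1) * h y' (u j) - \sum_j sg R n s j * (LL * (y' == l j)%:R).
    by rewrite -sumrB; apply: eq_bigr => j _; rewrite mulr1 mulrBr.
  apply: lerB => //; apply: le_trans (ler_norm _) _.
  exact: (h_bound y' (h y') n u (fun j => sg R n s j * 1) yc (Hh y' yc) Xu).
rewrite sumrB.
have -> : \sum_(s : SG) \sum_j sg R n s j * (LL * (y' == l j)%:R) = 0.
  rewrite exchange_big /= big1 // => j _.
  by rewrite -mulr_suml sum_sg mul0r.
rewrite subr0; apply: Gam_sum => j; by rewrite expr1n.
Qed.

Lemma Rad_Mx h0 (Ah0 : AH h0) k : (k < c)%N ->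
  RAD (Mx k) <= k.+1%:R * ((2 ^ n)%:R * (MM * Num.sqrt n%:R)).
Proof.
elim: k => [|k IH] kc.
  by rewrite mul1r; exact: (Rad_fv h0 Ah0 1 kc).
have k2 : (1 <= k.+2 <= c)%N by rewrite kc.
have H := Rad_max _ _ _ h0 Ah0 _ _ _ (bndv_Mx k (ltnW kc)) (bndv_fv k.+2 k2).
have -> : Mx k.+1 = (fun h j => Num.max (Mx k h j) (fv k.+2 h j)) by [].
apply: le_trans H _.
have := IH (ltnW kc); have := Rad_fv h0 Ah0 k.+2 k2.
rewrite -[k.+2%:R]natr1 -[k.+1%:R]natr1.
lra.
Qed.


Lemma sum_Gam_y (F : nat -> 'I_n -> R) k : (forall y j, F y j ^+ 2 <= 1) ->
  \sum_(s : SG) \sum_(1 <= y < k.+1) Gam (F y) s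
  <= k%:R * ((2 ^ n)%:R * (MM * Num.sqrt n%:R)).
Proof.
move=> hF; rewrite exchange_big /=.
apply: le_trans (_ : _ <= \sum_(1 <= y < k.+1) ((2 ^ n)%:R * (MM * Num.sqrt n%:R))) _.
  by apply: ler_sum => y _; apply: Gam_sum.
set Y := (2 ^ n)%:R * _; by rewrite sumr_const_nat subn1 /= mulr_natl.
Qed.

Lemma pm1_sq (b : bool) : ((if b then 1 else -1) : R) ^+ 2 <= 1.
Proof. by case: b; rewrite ?sqrrN expr1n. Qed.

Lemma core : (2 <= c)%N -> exists G : SG -> R,
  [/\ forall s, 0 <= G s,
      forall s h, AH h -> `|\sum_j sg R n s j * mv h j| <= G s &
      \sum_s G s <= (2 ^ n)%:R * (c%:R * (2 * c%:R - 1) * MM * Num.sqrt n%:R)].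
Proof.
move=> c2.
set X0 := (2 ^ n)%:R * (MM * Num.sqrt n%:R).
have X00 : 0 <= X0 by rewrite mulr_ge0 // mulr_ge0 ?sqrtr_ge0 // MM_ge0.
have ER : (2 ^ n)%:R * (c%:R * (2 * c%:R - 1) * MM * Num.sqrt n%:R)
    = c%:R * (2 * c%:R - 1) * X0 by rewrite /X0; ring.
rewrite ER.
have cR : 2 <= (c%:R : R) by rewrite (ler_nat R 2 c).
case: (eqVneq c 2) => [c2e | cne2].
  exists (fun s => \sum_(1 <= y < 3) Gam (fun j => if l j == y then 1 else -1) s).
  split.
  - by move=> s; apply: sumr_ge0 => y _; exact: Gam_ge0.
  - move=> s h Hh.
    have E : \sum_j sg R n s j * mv h j = \sum_(1 <= y < 3)
        \sum_j (sg R n s j * (if l j == y then 1 else -1)) * h y (u j).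
      rewrite exchange_big /=; apply: eq_bigr => j _.
      rewrite /mv /muv.
      have [[z [zc zl zE]] _] := max_otherP _ (fun y' => h y' (u j)) _ _ c2 (lc j).
      rewrite zE (_ : index_iota 1 3 = [:: 1%N; 2%N]) // !big_cons big_nil addr0 /=.
      clear zE; move: (lc j) zc zl; rewrite c2e.
      case: (l j) => [|[|[|?]]] //=; case: z => [|[|[|?]]] //= _ _ _; ring.
    rewrite E; apply: (le_trans (ler_norm_sum _ _ _)).
    rewrite [X in X <= _]big_nat_cond [X in _ <= X]big_nat_cond.
    apply: ler_sum => y /andP[yc _]; rewrite ltnS in yc.
    have yc' : (1 <= y <= c)%N by rewrite c2e.
    exact: (h_bound y (h y) n u (fun j => sg R n s j * (if l j == y then 1 else -1))
              yc' (Hh y yc') Xu).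
  - have := sum_Gam_y (fun y j => if l j == y then 1 else -1) 2 (fun y j => pm1_sq _).
    rewrite -/X0 => H; apply: le_trans H _.
    rewrite c2e ler_wpM2r //; lra.
have c3 : (3 <= c)%N by rewrite ltn_neqAle eq_sym cne2 c2.
have cR3 : 3 <= (c%:R : R) by rewrite (ler_nat R 3 c).
case: (pselect (exists h0, AH h0)) => [[h0 Ah0] | noh]; last first.
  exists (fun _ => 0); split => //.
  - by move=> s h Hh; exfalso; apply: noh; exists h.
  - rewrite big1 //; apply: mulr_ge0 => //; apply: mulr_ge0; lra.
have c1 : (c.-1 < c)%N by rewrite prednK // ltnW.
pose v := Mx c.-1.
have bv : BV v := bndv_Mx c.-1 c1.
have muvE h j : AH h -> muv h j = v h j by move=> Hh; exact: muv_Mx.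
exists (fun s => \sum_(1 <= y < c.+1) Gam (fun j => (l j == y)%:R) s
   + (RS s v - LIN s v h0) + (RS s (fun h j => - v h j) + LIN s v h0)
   + `|LIN s v h0|).
have bl s : bndf R PT AH (LIN s v) := bndv_lin _ _ _ _ s v bv.
have bln s : bndf R PT AH (LIN s (fun h j => - v h j))
   := bndv_lin _ _ _ _ s _ (bndvN _ _ _ _ _ bv).
have N0 s : 0 <= RS s v - LIN s v h0.
  by rewrite subr_ge0; exact: (sp_ub _ _ _ _ h0 (bl s) Ah0).
have N1 s : 0 <= RS s (fun h j => - v h j) + LIN s v h0.
  have := sp_ub _ _ _ _ h0 (bln s) Ah0; rewrite lin_N => H.
  by rewrite /rs; lra.
split.
- move=> s; apply: addr_ge0; last exact: normr_ge0.
  apply: addr_ge0; last exact: N1.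
  apply: addr_ge0; last exact: N0.
  by apply: sumr_ge0 => y _; exact: Gam_ge0.
- move=> s h Hh.
  have Emv : \sum_j sg R n s j * mv h j
      = \sum_j sg R n s j * h (l j) (u j) - LIN s v h.
    rewrite /lin -sumrB; apply: eq_bigr => j _.
    by rewrite /mv mulrBr muvE.
  have F1 := first_bound h s Hh.
  have D1 := sp_ub _ _ _ _ h (bl s) Hh.
  have D2 := sp_ub _ _ _ _ h (bln s) Hh; rewrite lin_N in D2.
  rewrite -/(RS s v) in D1; rewrite -/(RS s (fun h j => - v h j)) in D2.
  have ND : `|LIN s v h - LIN s v h0|
      <= (RS s v - LIN s v h0) + (RS s (fun h j => - v h j) + LIN s v h0).
    rewrite ler_norml; apply/andP; split.
      have := N0 s; lra.
    have := N1 s; lra.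
  have T1 := ler_normB (\sum_j sg R n s j * h (l j) (u j)) (LIN s v h).
  have T2 := ler_normD (LIN s v h - LIN s v h0) (LIN s v h0).
  rewrite subrK in T2.
  rewrite Emv; lra.
- rewrite !big_split /=.
  have S1 := sum_Gam_y (fun y j => (l j == y)%:R) c (fun y j => ind_sq _).
  rewrite -/X0 in S1.
  have S2 := Rad_Mx h0 Ah0 c.-1 c1; rewrite prednK ?(ltnW c2) // -/X0 in S2.
  have S3 := Rad_N R PT AH n v.
  have S4 : \sum_(s : SG) LIN s v h0 = 0 by exact: sum_lin0.
  have S5 : \sum_(s : SG) `|LIN s v h0| <= X0.
    have MM0 : 0 < MM by rewrite /MM mulr_gt0 // addr_gt0.
    have -> : \sum_(s : SG) `|LIN s v h0| = \sum_(s : SG) Num.sqrt ((LIN s v h0) ^+ 2).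
      by apply: eq_bigr => s _; rewrite sqrtr_sqr.
    apply: sum_sqrt_le.
    + by rewrite mulr_gt0 // sqrtr_gt0 ltr0n.
    + by move=> s; exact: sqr_ge0.
    have -> : \sum_(s : SG) (LIN s v h0) ^+ 2
        = \sum_(s : SG) \sum_j \sum_l' sg R n s j * sg R n s l' * (v h0 j * v h0 l').
      apply: eq_bigr => s _; rewrite /lin expr2 mulr_suml; apply: eq_bigr => j _.
      by rewrite mulr_sumr; apply: eq_bigr => k _; ring.
    rewrite sum_quad ler_wpM2l // exprMn sqr_sqrtr ?ler0n //.
    have -> : MM ^+ 2 * n%:R = \sum_(j < n) MM ^+ 2.
      by rewrite sumr_const card_ord mulr_natr.
    apply: ler_sum => j _.
    have := muv_abs h0 j c2 Ah0; rewrite muvE // => hv.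
    rewrite -expr2 -(real_normK (num_real (v h0 j))).
    by rewrite lerXn2r ?nnegrE ?normr_ge0 ?MM_ge0.
  rewrite -/(RAD v) -/(RAD (fun h j => - v h j)) S3 sumrN S4 oppr0.
  have K : 3 * c%:R + 1 <= c%:R * (2 * c%:R - 1) :> R by nra.
  have : (3 * c%:R + 1) * X0 <= c%:R * (2 * c%:R - 1) * X0 by exact: ler_wpM2r.
  rewrite -/v in S2; lra.
Qed.

End Spec.

Import HBNNSimple.
Section Integ.
Local Open Scope ereal_scope.
Variables (R : realType) (dO : measure_display) (O : measurableType dO).
Variable P : probability O R.

Definition NN (f : O -> \bar R) := ereal_sup [set sintegral P h |
  h in [set h : {nnsfun O >-> R} | forall x, ((h x)%:E <= f x)%E]].

Lemma NNE f : (forall x, 0 <= f x) -> \int[P]_x f x = NN f.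
Proof. by move=> f0; rewrite ge0_integralTE. Qed.

Lemma NN_ge0 f : (forall x, 0 <= f x) -> 0 <= NN f.
Proof. by move=> f0; rewrite -NNE //; exact: integral_ge0. Qed.

Lemma NN_mono f g : (forall x, f x <= g x) -> NN f <= NN g.
Proof.
move=> fg; apply: ereal_sup_le => _ [h hf <-]; exists h => // x.
exact: le_trans (hf x) (fg x).
Qed.

Lemma NN_add f g : (forall x, 0 <= f x) -> (forall x, 0 <= g x) ->
  NN f + NN g <= NN (fun x => f x + g x).
Proof.
move=> f0 g0.
set s := NN (fun x => f x + g x).
have key (h1 h2 : {nnsfun O >-> R}) : (forall x, (h1 x)%:E <= f x) -> (forall x, (h2 x)%:E <= g x) ->
    sintegral P h1 + sintegral P h2 <= s.
  move=> H1 H2; apply: ereal_sup_ubound; exists (add_nnsfun h1 h2).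
    by move=> x /=; rewrite EFinD; apply: leeD.
  exact: sintegralD.
have [sy|sy] := eqVneq s +oo; first by rewrite sy leey.
have s0 : 0 <= s by apply: NN_ge0 => x; rewrite adde_ge0.
have sfin : s < +oo by rewrite ltey.
have fin_of x : 0 <= x -> x <= s -> x \is a fin_num.
  by move=> x0 xs; rewrite ge0_fin_numE // (le_lt_trans xs sfin).
have z1 : forall x, ((@nnsfun0 _ O R) x)%:E <= f x by move=> x /=.
have z2 : forall x, ((@nnsfun0 _ O R) x)%:E <= g x by move=> x /=.
have Hb (h2 : {nnsfun O >-> R}) : (forall x, (h2 x)%:E <= g x) -> NN f + sintegral P h2 <= s.
  move=> H2.
  have bfin : sintegral P h2 \is a fin_num.
    apply: fin_of; first exact: sintegral_ge0.
    by have := key _ _ z1 H2; rewrite sintegral0 add0e.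
  rewrite -leeBrDr //; apply: ge_ereal_sup => _ [h1 H1 <-].
  by rewrite leeBrDr //; exact: key.
have NNffin : NN f \is a fin_num.
  apply: fin_of; first exact: NN_ge0.
  by have := Hb _ z2; rewrite sintegral0 adde0.
have H3 : NN g <= s - NN f.
  apply: ge_ereal_sup => _ [h2 H2 <-].
  by rewrite leeBrDr // addeC; exact: Hb.
by rewrite addeC -leeBrDr.
Qed.


Lemma NN_sum (I : Type) (r : seq I) (F : I -> O -> \bar R) :
  (forall i x, 0 <= F i x) ->
  \sum_(i <- r) NN (F i) <= NN (fun x => \sum_(i <- r) F i x).
Proof.
move=> F0; elim: r => [|a r IH].
  by rewrite big_nil; apply: NN_ge0 => x; rewrite big_nil.
rewrite big_cons; apply: le_trans (leeD2l _ IH) _.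
apply: le_trans (NN_add _ _ (F0 a) _) _.
  by move=> x; apply: sume_ge0 => i _.
by apply: NN_mono => x; rewrite big_cons.
Qed.

Lemma int_le_pos (f : O -> \bar R) : \int[P]_x f x <= \int[P]_x (f^\+ x).
Proof.
rewrite [X in X <= _]integralE.
have h0 : 0 <= \int[P]_x f^\- x by apply: integral_ge0 => x _; exact: funeneg_ge0.
have := leeB (lexx (\int[P]_x f^\+ x)) h0; rewrite sube0 => //.
Qed.

Lemma int_sum_bound (I : finType) (F : I -> O -> \bar R) (g : I -> O -> R) (B : R) :
  (0 <= B)%R -> (forall i x, 0 <= g i x)%R -> (forall i x, F i x <= (g i x)%:E) ->
  (forall x, \sum_i g i x <= B)%R -> \sum_i \int[P]_x F i x <= B%:E.
Proof.
move=> B0 g0 Fg gB.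
apply: le_trans (_ : _ <= \sum_i NN (fun x => (F i)^\+ x)) _.
  apply: lee_sum => i _; rewrite -NNE; first exact: int_le_pos.
  by move=> x; exact: funepos_ge0.
have HS := NN_sum _ (index_enum I) (fun i x => (F i)^\+ x) (fun i x => funepos_ge0 _ x).
apply: le_trans HS _.
have HM : NN (fun x => \sum_i (F i)^\+ x) <= NN (cst B%:E).
  apply: NN_mono => x; apply: le_trans (_ : _ <= \sum_i (g i x)%:E) _.
    apply: lee_sum => i _; rewrite funeposE.
    by case: (leP (F i x) 0) => _; rewrite ?maxEle //; rewrite ?lee_fin ?g0.
  by rewrite sumEFin lee_fin.
apply: le_trans HM _.
rewrite -NNE; last by move=> x; rewrite lee_fin.
rewrite integral_cst //; set t := (X in _ * X).
have -> : t = 1 by exact: probability_setT.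
by rewrite mule1.
Qed.

End Integ.

Theorem lemmaE3 (R : realType) (d c n : nat) (X : set (d.-tuple R))
  (S : d.-tuple R -> d.-tuple R -> R)
  (lam : nat -> R) (phi : nat -> d.-tuple R -> R)
  (C Bp Bm Rr delta : R)
  (dO : measure_display) (O : measurableType dO) (P : probability O R)
  (D : probability (d.-tuple R * nat)%type R)
  (Z Z' : 'I_n -> O -> (d.-tuple R * nat)%type) :
  compact (@rowv R d @` X) ->
  (2 <= c)%N ->
  (* training sample and (ghost) sample defining the expectation: i.i.d. ~ D *)
  iid_from P D Z -> iid_from P D Z' ->
  (forall i w, X (Z i w).1 /\ (1 <= (Z i w).2 <= c)%N) ->
  (forall i w, X (Z' i w).1 /\ (1 <= (Z' i w).2 <= c)%N) ->
  (* S : X x X -> [0,1], symmetric, continuous *)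
  (forall x t, X x -> X t -> 0 <= S x t <= 1) ->
  (forall x t, X x -> X t -> S x t = S t x) ->
  {within (@rowv R d @` X) `*` (@rowv R d @` X),
     continuous (fun p : 'rV[R]_d * 'rV[R]_d => S (tupv p.1) (tupv p.2))} ->
  (* (lam_k, phi_k) : eigenvalues / orthonormal eigenfunctions of L_S *)
  (forall k l, intX X (fun t => phi k t * phi l t) = ((k == l)%:R)%:E) ->
  (forall k x, X x -> intX X (fun t => S x t * phi k t) = (lam k * phi k x)%:E) ->
  (forall x t, X x -> X t ->
     (fun N => \sum_(k < N) lam k * phi k x * phi k t) @ \oo --> S x t) ->
  (* sum_k lam_k |phi_k(x)|^2 < C *)
  0 < C ->
  (forall x, X x -> cvgn (series (fun k => lam k * `|phi k x| ^+ 2)) /\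
                    limn (series (fun k => lam k * `|phi k x| ^+ 2)) < C) ->
  0 < Bp -> 0 < Bm -> 0 < Rr ->
  (forall x, X x -> (`|Splus_diag lam phi x| <= (Rr ^+ 2)%:E)%E) ->
  (forall x, X x -> (`|Sminus_diag lam phi x| <= (Rr ^+ 2)%:E)%E) ->
  0 < delta < 1 ->
  exists E : set O, [/\ measurable E, ((1 - delta)%:E <= P E)%E &
    forall w, E w ->
      (Rademacher P Z'
         (HS S (Splus lam phi) (Sminus lam phi) Bp Bm
            (fun i => (Z i w).1) (fun i => (Z i w).2) c)
       <= (Rr * (2 * c%:R - 1) * c%:R * (Bp + Bm) / Num.sqrt n%:R
           + 2 * c%:R * (2 * c%:R - 1) * (Bp + Bm) * Rr ^+ 2
             * Num.sqrt (ln (2 / delta) / (2 * n%:R)))%:E)%E].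
Proof.
move=> _ c2 _ _ HZ HZ' _ _ _ _ _ Hexp _ _ Bp0 Bm0 Rr0 Hdp Hdm /andP[d0 d1].
exists setT; split => //.
  have -> : P setT = 1%E by exact: probability_setT.
  by rewrite lee_fin lerBlDr lerDl ltW.
move=> w _.
pose xs := fun i => (Z i w).1.
pose ys := fun i => (Z i w).2.
have Xxs i : X (xs i) by exact: (HZ i w).1.
pose K := c%:R * (2 * c%:R - 1) * MM R Rr Bp Bm * Num.sqrt n%:R.
have cR : 2 <= (c%:R : R) by rewrite (ler_nat R 2 c).
have MM0 : 0 <= MM R Rr Bp Bm by rewrite /MM mulr_ge0 // ?addr_ge0 // ltW.
have K0 : 0 <= K.
  rewrite /K mulr_ge0 ?sqrtr_ge0 // mulr_ge0 // mulr_ge0 //; lra.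
pose F (s : {ffun 'I_n -> bool}) (w' : O) :=
  ereal_sup [set (`| n%:R^-1 * \sum_i (-1) ^+ s i * m (Z' i w').1 (Z' i w').2 |)%:E
        | m in HS S (Splus lam phi) (Sminus lam phi) Bp Bm xs ys c].
have ex w' : exists G : {ffun 'I_n -> bool} -> R,
    [/\ forall s, 0 <= G s,
        forall s, (F s w' <= (n%:R^-1 * G s)%:E)%E &
        \sum_s G s <= (2 ^ n)%:R * K].
  case: (posnP n) => [nz | npos].
    exists (fun _ => 0); split => //.
    - move=> s; apply: ge_ereal_sup => _ [m _ <-].
      have -> : (n%:R^-1 : R) = 0 by rewrite nz invr0.
      by rewrite !mul0r normr0.
    - by rewrite big1 // mulr_ge0.
  have Xu j : X (Z' j w').1 by exact: (HZ' j w').1.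
  have lc j : (1 <= (Z' j w').2 <= c)%N by exact: (HZ' j w').2.
  have [G [G0 G1 G2]] := core R d X S lam phi Rr Hdp Hdm Hexp n xs ys c Bp Bm
     Xxs Bp0 Bm0 Rr0 (fun j => (Z' j w').1) (fun j => (Z' j w').2) Xu lc npos c2.
  exists G; split => //.
  move=> s; apply: ge_ereal_sup => _ [m [h [Hh ->]] <-].
  rewrite lee_fin normrM ger0_norm ?invr_ge0 ?ler0n //.
  apply: ler_wpM2l; first by rewrite invr_ge0 ler0n.
  exact: (G1 s h Hh).
have [Gf HGf] := choice ex.
have main : (Rademacher P Z' (HS S (Splus lam phi) (Sminus lam phi) Bp Bm xs ys c)
    <= (n%:R^-1 * K)%:E)%E.
  rewrite /Rademacher.
  have HI : (\sum_(s : {ffun 'I_n -> bool}) \int[P]_w' F s w'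
      <= ((2 ^ n)%:R * (n%:R^-1 * K))%:E)%E.
    apply: (@int_sum_bound R _ O P _ F (fun s w' => n%:R^-1 * Gf w' s)).
    - by rewrite mulr_ge0 // mulr_ge0 // invr_ge0 ler0n.
    - move=> s w'; have [G0 _ _] := HGf w'.
      by rewrite mulr_ge0 ?invr_ge0 ?ler0n.
    - by move=> s w'; have [_ G1 _] := HGf w'; exact: G1.
    - move=> w'; have [_ _ G2] := HGf w'.
      by rewrite -mulr_sumr mulrCA; apply: ler_wpM2l => //.
  have p0 : (0 <= ((2 ^ n)%:R^-1 : R)%:E)%E by rewrite lee_fin invr_ge0 ler0n.
  apply: le_trans (lee_wpmul2l p0 HI) _.
  have n2 : ((2 ^ n)%:R : R) != 0 by rewrite pnatr_eq0 expn_eq0.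
  by rewrite -EFinM mulKf.
apply: le_trans main _; rewrite lee_fin.
have E1 : n%:R^-1 * Num.sqrt n%:R = (Num.sqrt n%:R)^-1 :> R.
  case: (posnP n) => [->|npos]; first by rewrite sqrtr0 invr0 mul0r.
  have s0 : Num.sqrt n%:R != 0 :> R by rewrite sqrtr_eq0 -ltNge ltr0n.
  rewrite -{1}(sqr_sqrtr (ler0n R n)) expr2 invfM -mulrA mulVf ?mulr1 //.
have -> : n%:R^-1 * K = Rr * (2 * c%:R - 1) * c%:R * (Bp + Bm) / Num.sqrt n%:R.
  by rewrite /K /MM -E1; ring.
rewrite lerDl; apply: mulr_ge0; last exact: sqrtr_ge0.
apply: mulr_ge0; last exact: sqr_ge0.
apply: mulr_ge0; last by rewrite addr_ge0 // ltW.
apply: mulr_ge0; lra.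
Qed.
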